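(* Let $W\colon \mathrm{GL}^+(3)\to\mathbb{R}$ be a differentiable stored energy density, where $\mathrm{GL}^+(3)=\{X\in\mathbb{R}^{3\times 3}: \det X>0\}$, and let $S_1(F)=DW(F)$ denote its first Piola–Kirchhoff stress tensor. Assume $W$ is strictly rank-one convex in the monotonicity sense: for every $F\in\mathrm{GL}^+(3)$ and all $\xi,\eta\in\mathbb{R}^3$ with $\xi\otimes\eta\neq 0$ and $F+\xi\otimes\eta\in\mathrm{GL}^+(3)$, $$\langle S_1(F+\xi\otimes\eta)-S_1(F),\,\xi\otimes\eta\rangle_{\mathbb{R}^{3\times3}}>0.$$ Define the Cauchy stress $\sigma\colon\mathrm{GL}^+(3)\to\mathbb{R}^{3\times3}$ by $\sigma(F)=S_1(F)\,(\mathrm{Cof}\,F)^{-1}$. Then $\sigma$ is rank-one injective at every $F\in\mathrm{GL}^+(3)$: if $F\in\mathrm{GL}^+(3)$, $\xi,\eta\in\mathbb{R}^3$ with $F+\xi\otimes\eta\in\mathrm{GL}^+(3)$ and $\sigma(F+\xi\otimes\eta)=\sigma(F)$, then $\xi\otimes\eta=0$.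
   Context: $\langle X,Y\rangle_{\mathbb{R}^{3\times3}}=\mathrm{tr}(X^TY)$ is the Frobenius inner product; $\xi\otimes\eta$ is the dyadic product, the matrix with entries $\xi_i\eta_j$; $\mathrm{Cof}\,F=(\det F)\,F^{-T}$ is the cofactor matrix. A stress tensor $S$ is called rank-one injective at $F$ if $S(F+\xi\otimes\eta)=S(F)$ holds only for $\xi\otimes\eta=0$. *)

(* Defs.v *)
From HB Require Import structures.
From mathcomp Require Import all_boot all_order all_algebra.
From mathcomp Require Import all_classical all_reals all_analysis.
Set Implicit Arguments. Unset Strict Implicit. Unset Printing Implicit Defensive.
Import Order.TTheory GRing.Theory Num.Theory.
Import numFieldNormedType.Exports.
Local Open Scope ring_scope.

Definition frob (R : ringType) (X Y : 'M[R]_3) : R := \tr (X^T *m Y).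

Definition dyad (R : ringType) (xi eta : 'cV[R]_3) : 'M[R]_3 :=
  \matrix_(i, j) (xi i 0 * eta j 0).

Definition Cof (R : comUnitRingType) (F : 'M[R]_3) : 'M[R]_3 :=
  \det F *: (invmx F)^T.

Definition cauchy_stress (R : comUnitRingType) (S1 : 'M[R]_3 -> 'M[R]_3) (F : 'M[R]_3)
  : 'M[R]_3 := S1 F *m invmx (Cof F).

(* Main.v *)
Require Import Defs.
From HB Require Import structures.
From mathcomp Require Import all_boot all_order all_algebra.
From mathcomp Require Import all_classical all_reals all_analysis.
From mathcomp Require Import ring.
Import Order.TTheory GRing.Theory Num.Theory.
Import numFieldNormedType.Exports.
Local Open Scope ring_scope.

Lemma matE {R : Type} {m n} (M : 'M[R]_(m.+1, n.+1)) :
  M = \matrix_(i, j) M (inord (val i)) (inord (val j)).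
Proof. by apply/matrixP => i j; rewrite mxE !inord_val. Qed.

Lemma det2 (R : comNzRingType) (M : 'M[R]_2) :
  \det M = M 0 0 * M 1 1 - M 0 1 * M 1 0.
Proof.
rewrite (expand_det_row M 0) !big_ord_recr big_ord0 /cofactor !det_mx11.
rewrite [in LHS](matE M) !mxE /=.
have -> : (0 : 'I_2) = inord 0 by apply/val_inj; rewrite /= inordK.
have -> : (1 : 'I_2) = inord 1 by apply/val_inj; rewrite /= inordK.
rewrite /bump /= expr0 expr1; ring.
Qed.

Lemma key (R : comNzRingType) (F : 'M[R]_3) (xi eta : 'cV[R]_3) :
  (\adj (F + dyad xi eta))^T *m eta = (\adj F)^T *m eta.
Proof.
apply/matrixP => i j; rewrite !mxE !big_ord_recr !big_ord0 /= !mxE /cofactor !det2.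
rewrite [F]matE [xi]matE [eta]matE !mxE /=.
rewrite /bump !ord1 /=.
case: i => [[|[|[|i]]] Hi] //=; rewrite ?[(1 %% 2)%N]/(1%N) ?addn0 ?add0n ?addn1 ?add1n; ring.
Qed.

Lemma frob_dyad (R : comNzRingType) (X : 'M[R]_3) (xi eta : 'cV[R]_3) :
  frob X (dyad xi eta) = ((xi^T *m X) *m eta) 0 0.
Proof.
rewrite /frob /mxtrace !mxE.
do 3 (rewrite ?big_ord_recr ?big_ord0 /= ?mxE).
ring.
Qed.

Lemma Cof_unit {R : realType} {X : 'M[R]_3} : 0 < \det X ->
  X \in unitmx /\ Cof X = (\adj X)^T /\ Cof X \in unitmx.
Proof.
move=> hX.
have hX0 : \det X != 0 by rewrite gt_eqF.
have uX : X \in unitmx by rewrite unitmxE unitfE.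
have hC : Cof X = (\adj X)^T.
  by rewrite /Cof /invmx uX linearZ /= scalerA mulfV // scale1r.
split=> //; split=> //.
rewrite unitmxE /Cof detZ det_tr det_inv unitfE mulf_neq0 ?expf_neq0 ?invr_eq0 //.
Qed.

Theorem mainTheorem1 (R : realType) (W : 'M[R]_3 -> R) (S1 : 'M[R]_3 -> 'M[R]_3)
  (hW : forall F : 'M[R]_3, 0 < \det F ->
          differentiable W F /\ forall H : 'M[R]_3, 'd W F H = frob (S1 F) H)
  (hconv : forall (F : 'M[R]_3) (xi eta : 'cV[R]_3),
          0 < \det F -> dyad xi eta != 0 -> 0 < \det (F + dyad xi eta) ->
          0 < frob (S1 (F + dyad xi eta) - S1 F) (dyad xi eta)) :
  forall (F : 'M[R]_3) (xi eta : 'cV[R]_3),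
    0 < \det F -> 0 < \det (F + dyad xi eta) ->
    cauchy_stress S1 (F + dyad xi eta) = cauchy_stress S1 F -> dyad xi eta = 0.
Proof.
move=> F xi eta hF hG hs.
have [//|hD] := eqVneq (dyad xi eta) 0.
have := hconv F xi eta hF hD hG.
have [_ [CF uCF]] := (Cof_unit hF).
have [_ [CG uCG]] := (Cof_unit hG).
have eF : S1 F = cauchy_stress S1 F *m Cof F by rewrite /cauchy_stress mulmxKV.
have eG : S1 (F + dyad xi eta) = cauchy_stress S1 (F + dyad xi eta) *m Cof (F + dyad xi eta)
  by rewrite /cauchy_stress mulmxKV.
rewrite frob_dyad eG eF hs -mulmxBr CF CG -!mulmxA mulmxBl key subrr !mulmx0 mxE.
by rewrite ltxx.
Qed.
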